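(* In the Neutralization-Based Reclamation (NBR) scheme described in the context, a thread can prevent from being reclaimed only the nodes that it reserves in a single operation.
   Context: Setting: an asynchronous shared-memory system with a fixed number of threads operating on a linked concurrent data structure; each unlinked node is retired by exactly one thread. NBR works as follows. Each thread has a private limbo bag of retired nodes, a thread-local flag restartable, and a row of a shared array reservations; each data structure operation reserves a bounded number of nodes, smaller than the limbo bag size threshold. Operations consist of read phases (start from an entry point, read only; restartable set to true at the start after clearing previous reservations) and write phases (entered after writing reservations of all nodes to be accessed in the write phase and setting restartable to false; only reserved nodes are accessed). On a neutralizing signal a thread with restartable true discards its private references and restarts its read phase from a checkpoint; a thread with restartable false ignores the signal. A thread appends each node it retires to its limbo bag; whenever the limbo bag exceeds its threshold, the thread signals all other threads, scans all reservations, and frees every node in its limbo bag that is not reserved. Signals are assumed to be handled by the recipient before it takes any further step once the sender finishes sending. *)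

(* Defs.v *)
From mathcomp Require Import all_boot.

Set Implicit Arguments.
Unset Strict Implicit.
Unset Printing Implicit Defensive.

Section NBR.

(* T : the fixed, finite set of threads; N : nodes; threshold : limbo bag
   size threshold. *)
Variables (T : finType) (N : eqType) (threshold : nat).

(* For each thread t:
   - rstb t  : the thread-local flag `restartable`
   - resv t  : the row of the shared array `reservations` owned by t
   - opc t   : number of the operation t is currently executing
               (0 = no operation started yet)
   - bag t   : t's private limbo bag
   - scan t  : None if t is not reclaiming; Some l while t is reclaiming,
               l being the reservation rows (thread, row snapshot) it has
               read so far. *)
Record state := State {
  rstb : T -> bool;
  resv : T -> seq N;
  opc  : T -> nat;
  bag  : T -> seq N;
  scan : T -> option (seq (T * seq N))
}.

Definition upd (A : Type) (f : T -> A) (t : T) (v : A) : T -> A :=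
  fun u => if u == t then v else f u.

Inductive action :=
| BeginOp    of T        (* start a new operation (begins with a read phase) *)
| StartRead  of T        (* start a further read phase of the current operation *)
| Reserve    of T & N
| StartWrite of T
| Retire     of T & N
| Signal     of T        (* limbo bag over threshold: neutralize all others *)
| ScanRow    of T & T
| Free       of T.       (* reclaimer frees all unreserved nodes of its bag *)

Inductive step : state -> action -> state -> Prop :=
| st_begin s t :
    scan s t = None ->
    step s (BeginOp t)
      (State (upd (rstb s) t true) (upd (resv s) t [::])
             (upd (opc s) t (opc s t).+1) (bag s) (scan s))
| st_read s t :
    scan s t = None -> 0 < opc s t ->
    step s (StartRead t)
      (State (upd (rstb s) t true) (upd (resv s) t [::])
             (opc s) (bag s) (scan s))
| st_reserve s t x :
    scan s t = None -> 0 < opc s t -> rstb s t = true ->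
    step s (Reserve t x)
      (State (rstb s) (upd (resv s) t (x :: resv s t))
             (opc s) (bag s) (scan s))
| st_write s t :
    scan s t = None -> 0 < opc s t -> rstb s t = true ->
    step s (StartWrite t)
      (State (upd (rstb s) t false) (resv s) (opc s) (bag s) (scan s))
| st_retire s t x :
    scan s t = None -> 0 < opc s t -> rstb s t = false ->
    step s (Retire t x)
      (State (rstb s) (resv s) (opc s) (upd (bag s) t (rcons (bag s t) x))
             (scan s))
| st_signal s r :
    (* signals are handled by every recipient before it takes another step:
       restartable recipients restart their read phase (clearing their
       reservations, restartable stays true); the others ignore it *)
    scan s r = None -> rstb s r = false -> threshold < size (bag s r) ->
    step s (Signal r)
      (State (rstb s)
             (fun u => if (u != r) && rstb s u then [::] else resv s u)
             (opc s) (bag s) (upd (scan s) r (Some [::])))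
| st_scanrow s r t l :
    scan s r = Some l -> t \notin unzip1 l ->
    step s (ScanRow r t)
      (State (rstb s) (resv s) (opc s) (bag s)
             (upd (scan s) r (Some ((t, resv s t) :: l))))
| st_free s r l :
    scan s r = Some l -> (forall t, t \in unzip1 l) ->
    step s (Free r)
      (State (rstb s) (resv s) (opc s)
             (upd (bag s) r [seq x <- bag s r | has (fun p => x \in p.2) l])
             (upd (scan s) r None)).

Definition init : state :=
  State (fun _ => true) (fun _ => [::]) (fun _ => 0) (fun _ => [::])
        (fun _ => None).

Definition execution (s : nat -> state) (a : nat -> action) (m : nat) : Prop :=
  s 0 = init /\ forall j, j < m -> step (s j) (a j) (s j.+1).

Definition reserved_in_op (s : nat -> state) (a : nat -> action)
    (t : T) (k : nat) (i : nat) (x : N) : Prop :=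
  exists j, j < i /\ a j = Reserve t x /\ opc (s j) t = k.

Definition prevents (s : nat -> state) (i : nat) (r t : T) (x : N) : Prop :=
  exists l, scan (s i) r = Some l /\ x \in bag (s i) r /\
    exists row, (t, row) \in l /\ x \in row.

End NBR.

(* Main.v *)
Require Import Defs.
From mathcomp Require Import all_boot.

Set Implicit Arguments.
Unset Strict Implicit.

Lemma uniq_row (T : eqType) (N : eqType) (l : seq (T * seq N)) t r1 r2 :
  uniq (unzip1 l) -> (t, r1) \in l -> (t, r2) \in l -> r1 = r2.
Proof.
elim: l => [|[u ru] l IH] //= /andP[Hu Hl].
rewrite !in_cons => /orP[/eqP E1|H1] /orP[/eqP E2|H2].
- by case: E1 E2 => _ -> [_ ->].
- case: E1 => Et _; subst u; by case/negP: Hu; have := map_f fst H2.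
- case: E2 => Et _; subst u; by case/negP: Hu; have := map_f fst H1.
- exact: IH.
Qed.

Section Inv.
Variables (T : finType) (N : eqType) (threshold : nat)
  (s : nat -> state T N) (a : nat -> action T N) (m : nat).

Definition P j :=
  (forall t x, x \in resv (s j) t -> exists j', j' < j /\ a j' = Reserve t x /\
       opc (s j') t = opc (s j) t) /\
  (forall r l, scan (s j) r = Some l -> uniq (unzip1 l) /\
     forall t row, (t, row) \in l -> exists j0, j0 < j /\ row = resv (s j0) t).

Lemma inv : execution threshold s a m -> forall j, j <= m -> P j.
Proof.
move=> [H0 Hst]; elim=> [|j IH] Hj.
  by rewrite /P H0; split.
have [R S] := IH (ltnW Hj).
have Hs := Hst j Hj.
remember (s j) as s0 eqn:E0; remember (a j) as a0 eqn:Ea;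
remember (s j.+1) as s1 eqn:E1.
rewrite /P -E1.
destruct Hs; split => /=; rewrite /upd.
- move=> t0 x; case: eqP => // _ /R [j' [? [? ?]]]; exists j'; split => //; exact: ltnW.
- move=> r0 l0 /S [U W]; split => // t0 row /W [j0 [? ?]]; exists j0; split => //; exact: ltnW.
- move=> t0 x; case: eqP => // _ /R [j' [? [? ?]]]; exists j'; split => //; exact: ltnW.
- move=> r0 l0 /S [U W]; split => // t0 row /W [j0 [? ?]]; exists j0; split => //; exact: ltnW.
- move=> t0 y; case: eqP => [->|_].
    rewrite in_cons => /orP[/eqP->|/R [j' [? [? ?]]]].
      by exists j; rewrite -E0 -Ea.
    by exists j'; split => //; exact: ltnW.
  move=> /R [j' [? [? ?]]]; exists j'; split => //; exact: ltnW.
- move=> r0 l0 /S [U W]; split => // t0 row /W [j0 [? ?]]; exists j0; split => //; exact: ltnW.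
- move=> t0 y /R [j' [? [? ?]]]; exists j'; split => //; exact: ltnW.
- move=> r0 l0 /S [U W]; split => // t0 row /W [j0 [? ?]]; exists j0; split => //; exact: ltnW.
- move=> t0 y /R [j' [? [? ?]]]; exists j'; split => //; exact: ltnW.
- move=> r0 l0 /S [U W]; split => // t0 row /W [j0 [? ?]]; exists j0; split => //; exact: ltnW.
- move=> t0 y; case: ifP => // _ /R [j' [? [? ?]]]; exists j'; split => //; exact: ltnW.
- move=> r0 l0; case: eqP => [_ [<-]|_ /S [U W]] //.
  split => // t0 row /W [j0 [? ?]]; exists j0; split => //; exact: ltnW.
- move=> t0 y /R [j' [? [? ?]]]; exists j'; split => //; exact: ltnW.
- move=> r0 l0; case: eqP => [_|_ /S [U W]].
    move=> -[<-] /=; have [U W] := S _ _ H; split; first by apply/andP; split.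
    move=> t1 row; rewrite in_cons => /orP[/eqP[-> ->]|/W [j0 [? ?]]].
      by exists j; rewrite -E0.
    by exists j0; split => //; exact: ltnW.
  split => // t1 row /W [j0 [? ?]]; exists j0; split => //; exact: ltnW.
- move=> t0 y /R [j' [? [? ?]]]; exists j'; split => //; exact: ltnW.
- move=> r0 l0; case: eqP => [_ //|_ /S [U W]].
  split => // t1 row /W [j0 [? ?]]; exists j0; split => //; exact: ltnW.
Qed.
End Inv.

Theorem corollary8 (T : finType) (N : eqType) (threshold : nat)
    (s : nat -> state T N) (a : nat -> action T N) (m : nat) :
  execution threshold s a m ->
  forall (i : nat) (r t : T), i < m -> a i = @Free T N r ->
  exists k : nat, forall x : N, prevents s i r t x -> reserved_in_op s a t k i x.
Proof.
move=> Hex i r t Him _.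
have Inv := inv Hex.
have [R S] := Inv i (ltnW Him).
case Hsc: (scan (s i) r) => [l|]; last first.
  by exists 0 => x [l' [E _]]; rewrite Hsc in E.
have [U W] := S _ _ Hsc.
case Hh: (has (fun p => p.1 == t) l); last first.
  exists 0 => x [l' [E [_ [row [Hin _]]]]]; rewrite Hsc in E; case: E => E; subst l'.
  by move/negbT/hasPn: Hh => /(_ _ Hin) /= /eqP.
move/hasP: Hh => [[t' row0] Hin /= /eqP Et]; subst t'.
have [j0 [Hj0 Erow]] := W _ _ Hin.
exists (opc (s j0) t) => x [l' [E [_ [row [Hin' Hx]]]]].
rewrite Hsc in E; case: E => E; subst l'.
have Er := uniq_row U Hin' Hin; subst row.
have [R0 _] := Inv j0 (ltnW (ltn_trans Hj0 Him)).
rewrite Erow in Hx; have [j' [Hj' [Ha Ho]]] := R0 _ _ Hx.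
by exists j'; split => //; exact: (ltn_trans Hj' Hj0).
Qed.
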